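(* Let $q$ be a prime power, $g,s\ge 1$ integers, and $V=\mathrm{GF}(q^g)^s$ regarded as a $gs$-dimensional vector space over $\mathrm{GF}(q)$. For every integer $k\ge 1$, the number $\#\mathcal{F}_k$ of fat $k$-dimensional $\mathrm{GF}(q)$-subspaces of $V$ is \[ \#\mathcal{F}_k=q^{(g-1)\binom{k}{2}}\prod_{i=0}^{k-1}\frac{q^{g(s-i)}-1}{q^{k-i}-1}. \]
   Context: A $\mathrm{GF}(q)$-subspace $U\le V$ is called fat if $\dim_{\mathrm{GF}(q^g)}\langle U\rangle_{\mathrm{GF}(q^g)}=\dim_{\mathrm{GF}(q)}U$, where $\langle U\rangle_{\mathrm{GF}(q^g)}$ is the $\mathrm{GF}(q^g)$-span of $U$; equivalently, some (and then every) $\mathrm{GF}(q)$-basis of $U$ is linearly independent over $\mathrm{GF}(q^g)$. $\mathcal{F}_k$ denotes the set of fat $k$-dimensional $\mathrm{GF}(q)$-subspaces of $V$. *)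

(* Defs.v *)
From HB Require Import structures.
From mathcomp Require Import all_boot all_order all_algebra all_field.
Set Implicit Arguments. Unset Strict Implicit. Unset Printing Implicit Defensive.
Import Order.TTheory GRing.Theory Num.Theory.
Local Open Scope ring_scope.

(* F = GF(q) (any finite field), L : fieldExtType F with \dim {:L} = g,
   so L = GF(q^g).  V = L^s, viewed as a GF(q)-vector space: the type of
   finite functions 'I_s -> L with its canonical vectType F structure,
   wrapped in finvect_type so that it is also a finType. *)
Definition Vsp (F : finFieldType) (L : fieldExtType F) (s : nat) : predArgType :=
  finvect_type {ffun 'I_s -> L}.

Section Fat.
Variables (F : finFieldType) (L : fieldExtType F) (s : nat).
Local Notation V := (Vsp L s).

(* Dimension over L of the L-span of an F-subspace U of V: the rank over L
   of the matrix whose rows are the vectors of an F-basis of U (the L-span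
   of U is the L-span of any F-basis of U). *)
Definition Lspan_dim (U : {vspace V}) : nat :=
  \rank (\matrix_(i < \dim U, j < s)
           ((tnth (vbasis U) i : {ffun 'I_s -> L}) j)).

Definition fat (U : {vspace V}) : bool := Lspan_dim U == \dim U.

Definition vspace_of_set (A : {set V}) : {vspace V} := <<enum A>>%VS.

Definition is_subspace_set (A : {set V}) : bool :=
  A == [set v | v \in vspace_of_set A].

(* F_k, the set of fat k-dimensional F-subspaces of V, each subspace
   represented by its (uniquely determined) set of vectors. *)
Definition fat_subspaces (k : nat) : {set {set V}} :=
  [set A : {set V} | [&& is_subspace_set A,
                         \dim (vspace_of_set A) == k &
                         fat (vspace_of_set A)]].
End Fat.

(* Main.v *)
Require Import Defs.
From HB Require Import structures.
From mathcomp Require Import all_boot all_order all_algebra all_field.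
From mathcomp Require Import ring.
Import Order.TTheory GRing.Theory Num.Theory.
Local Open Scope ring_scope.

Lemma card_rowfree (K : finFieldType) m n : (m <= n)%N ->
  #|[pred A : 'M[K]_(m, n) | row_free A]| = (\prod_(i < m) (#|K| ^ n - #|K| ^ i))%N.
Proof.
set p := #|K|; pose fr m := [pred A : 'M[K]_(m, n) | \rank A == m].
rewrite -/(fr m).
elim: m => [_ | m IHm /ltnW-le_mn].
  rewrite (@eq_card1 _ (0 : 'M_(0, n))) ?big_ord0 //= => A.
  by rewrite flatmx0 !inE mxrank.unlock !eqxx.
rewrite big_ord_recr /= -{}IHm //.
rewrite -sum_nat_const /= -sum1_card -add1n.
rewrite (partition_big dsubmx (fr m)) /= => [|A]; last first.
  rewrite !inE -{1}(vsubmxK A); move: {A}(_ A) (_ A) => Ad Au Afull.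
  rewrite eqn_leq rank_leq_row -(leq_add2l (\rank Au)) -mxrank_sum_cap.
  rewrite {1 3}[@mxrank]lock addsmxE (eqnP Afull) -lock -addnA.
  by rewrite leq_add ?rank_leq_row ?leq_addr.
apply: eq_bigr => A rAm; rewrite (reindex (col_mx^~ A)) /=; last first.
  exists usubmx => [v _ | vA]; first by rewrite col_mxKu.
  by case/andP=> _ /eqP <-; rewrite vsubmxK.
transitivity #|~: [set v *m A | v in 'rV_m]|; last first.
  rewrite cardsCs setCK card_imset ?card_mx ?card_ord ?mul1n //.
  have [B AB1] := row_freeP rAm; apply: can_inj (mulmx^~ B) _ => v.
  by rewrite -mulmxA AB1 mulmx1.
rewrite -sum1_card; apply: eq_bigl => v; rewrite !inE col_mxKd eqxx.
rewrite andbT eqn_leq rank_leq_row /= -(leq_add2r (\rank (v :&: A)%MS)).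
rewrite -addsmxE mxrank_sum_cap (eqnP rAm) addnAC leq_add2r.
rewrite (ltn_leqif (mxrank_leqif_sup _)) ?capmxSl // sub_capmx submx_refl.
by congr (~~ _); apply/submxP/imsetP=> [] [u]; exists u.
Qed.

Section Main.
Variables (F : finFieldType) (L : fieldExtType F) (s k : nat).
HB.instance Definition _ := Finite.copy L (finvect_type L).
Local Notation V := (Vsp L s).

Lemma scaleV (a : F) (f : V) j : (a *: f : {ffun 'I_s -> L}) j = a%:A * f j.
Proof. by rewrite ffunE mulr_algl. Qed.

Lemma sumV I r (P : pred I) (G : I -> V) j :
  ((\sum_(i <- r | P i) G i : V) : {ffun 'I_s -> L}) j
   = \sum_(i <- r | P i) (G i : {ffun 'I_s -> L}) j.
Proof. exact: sum_ffunE. Qed.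

Definition rowv (M : 'M[L]_(k, s)) i : V := [ffun j => M i j].
Definition rowt M : k.-tuple V := [tuple rowv M i | i < k].
Definition bt (U : {vspace V}) : k.-tuple V := [tuple (vbasis U)`_i | i < k].
Definition Bm (U : {vspace V}) : 'M[L]_(k, s) :=
  \matrix_(i, j) (((vbasis U)`_i : V) : {ffun 'I_s -> L}) j.
Definition Phi (x : {set V} * 'M[F]_k) : 'M[L]_(k, s) :=
  map_mx (in_alg L) x.2 *m Bm (vspace_of_set x.1).

Lemma rowPhi U P i :
  rowv (map_mx (in_alg L) P *m Bm U) i = \sum_(l < k) P i l *: (bt U)`_l.
Proof.
apply/ffunP => j; rewrite ffunE mxE sumV; apply: eq_bigr => l _.
by rewrite scaleV nth_mktuple !mxE.
Qed.

Lemma rowt_nth M (i : 'I_k) : (rowt M)`_i = rowv M i.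
Proof. exact: nth_mktuple. Qed.

Lemma rowfree_free M : row_free M -> free (rowt M).
Proof.
move=> fM; apply/freeP => c Hc i.
have: (\row_i0 (c i0)%:A : 'rV[L]_k) *m M == 0.
  apply/eqP/rowP => j; rewrite !mxE.
  have := congr1 (fun f : V => (f : {ffun 'I_s -> L}) j) Hc.
  rewrite sumV ffunE /= => H; rewrite -[RHS]H; apply: eq_bigr => l _.
  by rewrite scaleV rowt_nth ffunE mxE.
rewrite mulmx_free_eq0 // => /eqP/rowP/(_ i); rewrite !mxE => /eqP.
by rewrite scaler_eq0 oner_eq0 orbF => /eqP.
Qed.

Lemma dim_rowt M : row_free M -> \dim <<rowt M>> = k.
Proof. by move/rowfree_free/eqP; rewrite size_tuple. Qed.

Lemma vso (U : {vspace V}) : vspace_of_set [set v | v \in U] = U.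
Proof.
apply/subv_anti/andP; split.
  by apply/span_subvP => x; rewrite mem_enum inE.
by apply/subvP => v vU; apply: memv_span; rewrite mem_enum inE.
Qed.

Lemma btE U : \dim U = k -> (bt U : seq V) = vbasis U.
Proof.
rewrite /bt /=; move: (vbasis U); move: (\dim U) => n t nk; subst n.
rewrite -[RHS](map_tnth_enum t); apply: eq_map => i.
by rewrite /= (tnth_nth 0).
Qed.

Lemma bt_free U : \dim U = k -> free (bt U).
Proof. by move/btE ->; exact: basis_free (vbasisP U). Qed.

Lemma bt_span U : \dim U = k -> <<bt U>>%VS = U.
Proof. by move/btE ->; exact: span_basis (vbasisP U). Qed.

Lemma Lspan_dimE U : \dim U = k -> Lspan_dim U = \rank (Bm U).
Proof.
rewrite /Lspan_dim /Bm; move: (vbasis U); move: (\dim U) => n t nk; subst n.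
by congr (\rank _); apply/matrixP => i j; rewrite !mxE (tnth_nth 0).
Qed.


Lemma rank_left_unit (P : 'M[L]_k) (B : 'M[L]_(k, s)) :
  row_free P -> \rank (P *m B) = \rank B.
Proof.
rewrite row_free_unit => uP; apply/eqP; rewrite eqn_leq mxrankM_maxr /=.
by rewrite -{1}(mul1mx B) -(mulVmx uP) -mulmxA mxrankM_maxr.
Qed.

Lemma bt_mem U (l : 'I_k) : \dim U = k -> (bt U)`_l \in U.
Proof.
move=> dU; rewrite nth_mktuple; apply: vbasis_mem; apply: mem_nth.
by rewrite size_tuple dU.
Qed.

Lemma rowt_mem M x : x \in rowt M -> exists i, x = rowv M i.
Proof. by case/mapP => i _ ->; exists i. Qed.

Definition D := setX (fat_subspaces L s k) [set P : 'M[F]_k | row_free P].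
Definition R := [set M : 'M[L]_(k, s) | row_free M].

Lemma inD {A P} : (A, P) \in D ->
  [/\ A = [set v | v \in vspace_of_set A], \dim (vspace_of_set A) = k,
      \rank (Bm (vspace_of_set A)) = k & row_free P].
Proof.
rewrite !inE /is_subspace_set /= => /andP[/and3P[/eqP eA /eqP dA fA] fP]; split => //.
by rewrite -(Lspan_dimE _ dA) -[RHS]dA; apply/eqP.
Qed.

Lemma Phi_free {x} : x \in D -> row_free (Phi x).
Proof.
case: x => A P /inD[_ dA rB fP]; rewrite /row_free /Phi /= rank_left_unit ?rB //.
by rewrite /row_free mxrank_map.
Qed.

Lemma span_Phi {x} : x \in D -> <<rowt (Phi x)>>%VS = vspace_of_set x.1.
Proof.
case: x => A P Dx; have [_ dA _ _] := inD Dx; have fr := Phi_free Dx.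
apply/eqP; rewrite eqEdim dim_rowt // dA leqnn andbT.
apply/span_subvP => x /rowt_mem[i ->]; rewrite /Phi /= rowPhi.
by apply: rpred_sum => l _; apply: rpredZ; apply: bt_mem.
Qed.

Lemma Phi_inj : {in D &, injective Phi}.
Proof.
move=> [A1 P1] [A2 P2] D1 D2 e.
have [eA1 dA1 _ _] := inD D1; have [eA2 dA2 _ _] := inD D2.
have eU : vspace_of_set A1 = vspace_of_set A2.
  by rewrite -(span_Phi D1) -(span_Phi D2) e.
have eA : A1 = A2 by rewrite eA1 eA2 eU.
subst A2; congr (_, _); apply/matrixP => i l.
have := congr1 (fun M => coord (bt (vspace_of_set A1)) l (rowv M i)) e.
by rewrite /Phi /= !rowPhi !coord_sum_free ?bt_free.
Qed.

Lemma Phi_onto : Phi @: D = R.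
Proof.
apply/setP => M; apply/imsetP/idP => [[x Dx ->] | ]; first by rewrite inE Phi_free.
rewrite inE => fM.
set U := <<rowt M>>%VS; have dU : \dim U = k by apply: dim_rowt.
pose A := [set v | v \in U].
have eA : vspace_of_set A = U by apply: vso.
pose P := \matrix_(i, l) coord (bt U) l (rowv M i).
have eM : M = Phi (A, P).
  apply/matrixP => i j.
  have : rowv M i = rowv (Phi (A, P)) i.
    rewrite /Phi /= eA rowPhi.
    have : rowv M i \in <<bt U>>%VS.
      by rewrite bt_span //; apply: memv_span; rewrite -rowt_nth mem_nth ?size_tuple.
    move/coord_span => {1}->; apply: eq_bigr => l _; rewrite mxE.
    by rewrite nth_mktuple.
  by move/(congr1 (fun f : V => (f : {ffun 'I_s -> L}) j)); rewrite !ffunE.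
have rM : \rank M = k by apply/eqP.
exists (A, P) => //; rewrite !inE /= eA dU eqxx /=.
apply/andP; split; first (apply/andP; split).
- by rewrite /is_subspace_set eA.
- rewrite /fat Lspan_dimE // dU eqn_leq rank_leq_row /= -{1}rM eM /Phi /= eA.
  exact: mxrankM_maxr.
- rewrite /row_free eqn_leq rank_leq_row /= -(mxrank_map (in_alg L)) -{1}rM eM.
  exact: mxrankM_maxl.
Qed.

Lemma count_main :
  #|R| = (#|fat_subspaces L s k| * #|[set P : 'M[F]_k | row_free P]|)%N.
Proof. by rewrite -Phi_onto card_in_imset; [rewrite cardsX | exact: Phi_inj]. Qed.


Lemma cardL : #|L| = (#|F| ^ \dim {:L})%N.
Proof. by rewrite -(card_vspacef (Vector.class L)) card_vspace. Qed.

Lemma card_GLk : #|[set P : 'M[F]_k | row_free P]| = (\prod_(i < k) (#|F| ^ k - #|F| ^ i))%N.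
Proof. by rewrite -card_rowfree // cardsE. Qed.

Lemma card_GLk_gt0 : (0 < #|[set P : 'M[F]_k | row_free P]|)%N.
Proof.
rewrite card_GLk prodn_gt0 // => i; rewrite subn_gt0 ltn_exp2l ?ltn_ord //.
exact: finNzRing_gt1.
Qed.

Lemma count_nat : (k <= s)%N ->
  (#|fat_subspaces L s k| * \prod_(i < k) (#|F| ^ k - #|F| ^ i))%N =
  (\prod_(i < k) (#|F| ^ (\dim {:L} * s) - #|F| ^ (\dim {:L} * i)))%N.
Proof.
move=> ks; rewrite -card_GLk -count_main /R cardsE card_rowfree //.
by apply: eq_bigr => i _; rewrite cardL -!expnM.
Qed.

Lemma count_zero : (s < k)%N -> #|fat_subspaces L s k| = 0%N.
Proof.
move=> sk; have: #|R| = 0%N.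
  apply: eq_card0 => M; rewrite inE; apply/negP => /eqP rM.
  by have := rank_leq_col M; rewrite rM leqNgt sk.
rewrite count_main => /eqP; rewrite muln_eq0 => /orP[/eqP //|/eqP h].
by have := card_GLk_gt0; rewrite h.
Qed.

End Main.

Theorem lemma12 (F : finFieldType) (L : fieldExtType F) (s k : nat) :
  (1 <= s)%N -> (1 <= k)%N ->
  let q : rat := (#|F|)%:R in
  let g : nat := \dim {:L} in
  (#|fat_subspaces L s k|)%:R =
    q ^+ ((g - 1) * 'C(k, 2)) *
    \prod_(i < k) ((q ^ ((g%:Z) * (s%:Z - (i : nat)%:Z)) - 1)
                   / (q ^+ (k - i) - 1)).
Proof.
move=> hs hk q g.
have q1 : (1 < #|F|)%N := finNzRing_gt1 F.
have q1r : 1 < q by rewrite /q ltr1n.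
have q0 : q != 0 by rewrite gt_eqF // (lt_trans ltr01).
have g1 : (0 < g)%N by rewrite /g (leq_trans _ (dimvS (subvf (1%VS : {vspace L})))) // dimv1.
case: (leqP k s) => ks; last first.
  rewrite count_zero // (bigD1 (Ordinal ks)) //=.
  by rewrite !(subrr, mulr0, mul0r, expr0z).
have h := count_nat F L s k ks.
have eb : forall a b : nat, (a <= b)%N -> ((#|F| ^ b - #|F| ^ a)%N%:R : rat) = q ^+ b - q ^+ a.
  by move=> a b ab; rewrite natrB ?leq_exp2l // !natrX.
have hn : (#|fat_subspaces L s k|%:R : rat) * \prod_(i < k) (q ^+ k - q ^+ i)
          = \prod_(i < k) (q ^+ (g * s) - q ^+ (g * i)).
  have p1 : \prod_(i < k) (q ^+ k - q ^+ i) = (\prod_(i < k) (#|F| ^ k - #|F| ^ i))%N%:R.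
    by rewrite natr_prod; apply: eq_bigr => i _; rewrite eb // ltnW.
  have p2 : \prod_(i < k) (q ^+ (g * s) - q ^+ (g * i))
          = (\prod_(i < k) (#|F| ^ (\dim {:L} * s) - #|F| ^ (\dim {:L} * i)))%N%:R.
    rewrite natr_prod; apply: eq_bigr => i _; rewrite eb //.
    by rewrite leq_mul2l (leq_trans (ltnW (ltn_ord i))) ?orbT.
  by rewrite p1 p2 -natrM h.
have hb : \prod_(i < k) (q ^+ k - q ^+ i) != 0.
  rewrite prodf_seq_neq0; apply/allP => i _ /=; rewrite subr_eq0 gt_eqF //.
  by rewrite ltr_eXn2l.
transitivity ((\prod_(i < k) (q ^+ (g * s) - q ^+ (g * i))) / \prod_(i < k) (q ^+ k - q ^+ i)).
  by rewrite -hn mulfK.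
rewrite -prodf_div.
have -> : q ^+ ((g - 1) * 'C(k, 2)) = \prod_(i < k) q ^+ ((g - 1) * i).
  by rewrite prodrXr -big_distrr /= -bin2_sum big_mkord.
rewrite -big_split /=; apply: eq_bigr => i _.
have iS : (i <= s)%N by rewrite (leq_trans (ltnW (ltn_ord i))).
have ik : (i < k)%N := ltn_ord i.
rewrite subzn // -PoszM -exprnP.
have -> : q ^+ k = q ^+ i * q ^+ (k - i) by rewrite -exprD subnKC // ltnW.
have -> : q ^+ (g * s) = q ^+ ((g - 1) * i) * q ^+ i * q ^+ (g * (s - i)).
  rewrite -!exprD; congr (_ ^+ _).
  rewrite mulnBl mul1n subnK ?leq_pmull // mulnBr subnKC //.
  by rewrite leq_mul2l iS orbT.
have -> : q ^+ (g * i) = q ^+ ((g - 1) * i) * q ^+ i.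
  by rewrite -exprD mulnBl mul1n subnK ?leq_pmull.
have xn : q ^+ i != 0 by rewrite expf_neq0.
have dn : q ^+ (k - i) - 1 != 0.
  by rewrite subr_eq0 gt_eqF // exprn_egt1 // subn_eq0 -ltnNge.
set x := q ^+ i; set y := q ^+ ((g - 1) * i); set c := q ^+ (g * (s - i)).
set d := q ^+ (k - i).
field.
by rewrite dn -[X in _ - X]mulr1 -mulrBr mulf_neq0.
Qed.
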